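(* Let $n\ge1$ be an integer, $I,\Lambda$ non-empty sets, $P$ a $\Lambda\times I$ matrix with entries in $\mathbb{Z}_{n}\cup\{\mathbf{0}\}$, and $S=M^{0}[\mathbb{Z}_{n};I,\Lambda;P]$. Let $A$ be a finite alphabet, $\varphi:A\to S$ any map, and $\bar\varphi:A^{+}\to S$ its unique extension to a semigroup morphism. Then the language $\mathbf{0}\bar\varphi^{-1}\subseteq A^{+}$ has generalised star-height $0$.
   Context: $\mathbb{Z}_n$ is the cyclic group of order $n$ written additively. For a group $G$, non-empty sets $I,\Lambda$ and a $\Lambda\times I$ matrix $P=(p_{\lambda i})$ with entries in $G\cup\{\mathbf{0}\}$ ($\mathbf{0}$ a new symbol), the Rees zero-matrix semigroup $M^{0}[G;I,\Lambda;P]$ is $(I\times G\times\Lambda)\cup\{\mathbf{0}\}$ with $(i,g,\lambda)(j,h,\mu)=(i,g\,p_{\lambda j}\,h,\mu)$ if $p_{\lambda j}\ne\mathbf{0}$, $=\mathbf{0}$ if $p_{\lambda j}=\mathbf{0}$, and $x\mathbf{0}=\mathbf{0}x=\mathbf{0}$. Generalised regular expressions over $A$: $\emptyset$, $\varepsilon$ and each letter are expressions; if $E,F$ are expressions so are $E\cup F$, $EF$, $E^{\ast}$, $E^{c}$ (complement in $A^{\ast}$). Star-height: $h(\emptyset)=h(\varepsilon)=h(a)=0$, $h(E\cup F)=h(EF)=\max\{h(E),h(F)\}$, $h(E^{\ast})=h(E)+1$, $h(E^{c})=h(E)$; the star-height of a language is the minimum of $h(E)$ over expressions $E$ representing it.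 *)

(* Defs.v *)
From mathcomp Require Import all_boot all_order all_algebra.
Set Implicit Arguments. Unset Strict Implicit. Unset Printing Implicit Defensive.
Import GRing.Theory.
Local Open Scope ring_scope.

(* ---------- Rees zero-matrix semigroup M^0[G; I, Lambda; P] over an
   additively written group G (zmodType).  The zero element 0 is None. *)
Definition rees (G : zmodType) (I L : Type) : Type := option (I * G * L).

Definition rees_mul (G : zmodType) (I L : Type) (P : L -> I -> option G)
  (x y : rees G I L) : rees G I L :=
  match x, y with
  | Some (i, g, l), Some (j, h, m) =>
      match P l j with
      | Some p => Some (i, g + p + h, m)
      | None => None
      end
  | _, _ => None
  end.

Definition rees_ext (G : zmodType) (I L : Type) (P : L -> I -> option G)
  (A : Type) (phi : A -> rees G I L) (a : A) (w : seq A) : rees G I L :=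
  foldl (fun s b => rees_mul P s (phi b)) (phi a) w.

(* The language 0 phibar^{-1} subset of A^+ (seen inside A^* ). *)
Definition zero_preimage (G : zmodType) (I L : Type) (P : L -> I -> option G)
  (A : Type) (phi : A -> rees G I L) (w : seq A) : Prop :=
  match w with
  | [::] => False
  | a :: w' => rees_ext P phi a w' = None
  end.

Inductive gre (A : Type) : Type :=
  | GEmpty : gre A
  | GEps : gre A
  | GLetter : A -> gre A
  | GUnion : gre A -> gre A -> gre A
  | GConcat : gre A -> gre A -> gre A
  | GStar : gre A -> gre A
  | GCompl : gre A -> gre A.

Inductive star_lang (A : Type) (Lg : seq A -> Prop) : seq A -> Prop :=
  | star_nil : star_lang Lg [::]
  | star_cons u v : Lg u -> star_lang Lg v -> star_lang Lg (u ++ v).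

Fixpoint gre_lang (A : Type) (E : gre A) : seq A -> Prop :=
  match E with
  | GEmpty => fun _ => False
  | GEps => fun w => w = [::]
  | GLetter a => fun w => w = [:: a]
  | GUnion E F => fun w => gre_lang E w \/ gre_lang F w
  | GConcat E F => fun w => exists u v, w = u ++ v /\ gre_lang E u /\ gre_lang F v
  | GStar E => star_lang (gre_lang E)
  | GCompl E => fun w => ~ gre_lang E w
  end.

Fixpoint star_height (A : Type) (E : gre A) : nat :=
  match E with
  | GEmpty | GEps | GLetter _ => 0%N
  | GUnion E F | GConcat E F => maxn (star_height E) (star_height F)
  | GStar E => (star_height E).+1
  | GCompl E => star_height E
  end.

(* A language has generalised star-height 0 iff some expression of height 0
   represents it (the minimum of heights is 0). *)
Definition gen_star_height0 (A : Type) (Lg : seq A -> Prop) : Prop :=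
  exists E : gre A, star_height E = 0%N /\ forall w, gre_lang E w <-> Lg w.

(* Main.v *)
Require Import Defs.
From mathcomp Require Import all_boot all_order all_algebra.
From Stdlib Require Import Setoid. From Stdlib Require List.

Section S.
Variables (m : nat) (I L : Type) (P : L -> I -> option 'I_m.+1) (A : finType)
  (phi : A -> rees 'I_m.+1 I L).

Definition isN {T} (o : option T) : bool := if o is None then true else false.

Definition bad2 (x y : A) : bool :=
  match phi x, phi y with
  | Some (_, _, l), Some (j, _, _) => isN (P l j)
  | _, _ => true
  end.

Definition hasz (w : seq A) : bool := has (fun x => isN (phi x)) w.

Fixpoint pairbad (w : seq A) : bool :=
  match w with
  | x :: ((y :: _) as t) => bad2 x y || pairbad t
  | _ => false
  end.

Definition F := fun s b => rees_mul P s (phi b).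

Lemma fold_char (w : seq A) : forall (x : A) (s : rees 'I_m.+1 I L),
  (s = None \/ exists i g j h l, s = Some (i, g, l) /\ phi x = Some (j, h, l)) ->
  (foldl F s w = None <-> (s = None \/ hasz w \/ pairbad (x :: w))).
Proof.
elim: w => [|b w IH] x s Hs /=.
  by split; [left|case=> [//|[//|//]]].
have Hs' : rees_mul P s (phi b) = None \/ exists i g j h l,
    rees_mul P s (phi b) = Some (i, g, l) /\ phi b = Some (j, h, l).
  case: Hs => [->|[i [g [j [h [l [-> _]]]]]]]; first by left.
  rewrite /=; case: (phi b) => [[[j' h'] m']|]; last by left.
  case: (P l j') => [p|]; last by left.
  by right; exists i, (g + p + h')%R, j', h', m'.
rewrite (IH b _ Hs') /hasz /=.
case: Hs => [->|[i [g [j [h [l [-> Hx]]]]]]] /=.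
  split=> _; by [left|left].
rewrite /bad2 Hx.
case E: (phi b) => [[[j' h'] m']|] /=.
- case: (P l j') => [p|] /=.
  + split.
    * case=> [//|[H|H]]; right; [by left| by right].
    * case=> [//|[H|H]]; right; [by left| by right].
  + split=> _; [by right; right | by left].
- split=> _; [by right; left | by left].
Qed.

Lemma ext_char (a : A) (w : seq A) :
  rees_ext P phi a w = None <-> (hasz (a :: w) \/ pairbad (a :: w)).
Proof.
rewrite /rees_ext -/F.
have Hs : phi a = None \/ exists i g j h l, phi a = Some (i, g, l) /\ phi a = Some (j, h, l).
  case: (phi a) => [[[i g] l]|]; last by left.
  by right; exists i, g, i, g, l.
rewrite (fold_char w a (phi a) Hs) /hasz /=.
case E: (phi a) => [[[i g] l]|] /=.
- split; [case=> [//|//] | move=> H; by right].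
- split=> _; [by left | by left].
Qed.

Definition full : gre A := GCompl (GEmpty A).
Definition cont (E : gre A) : gre A := GConcat full (GConcat E full).

Lemma cont_lang E w : gre_lang (cont E) w <-> exists u z v, w = u ++ z ++ v /\ gre_lang E z.
Proof.
rewrite /cont /=; split.
- move=> [u [v' [-> [_ [z [v [-> [Hz _]]]]]]]]. by exists u, z, v.
- move=> [u [z [v [-> Hz]]]]. exists u, (z ++ v); split=> //; split; first by case.
  exists z, v; split=> //; split=> //; by case.
Qed.

Fixpoint union_seq {X} (s : seq X) (f : X -> gre A) : gre A :=
  match s with
  | [::] => GEmpty A
  | x :: s => GUnion (f x) (union_seq s f)
  end.

Lemma union_lang {X} (s : seq X) f w :
  gre_lang (union_seq s f) w <-> exists x, List.In x s /\ gre_lang (f x) w.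
Proof.
elim: s => [|x s IH] /=.
  by split=> // [[x [H _]]].
rewrite IH; split.
- case=> [H|[y [Hy H]]]; [by exists x; split; [left|] | by exists y; split; [right|]].
- move=> [y [[<-|Hy] H]]; [by left | by right; exists y].
Qed.

Lemma union_sh {X} (s : seq X) f : (forall x, star_height (f x) = 0%N) ->
  star_height (union_seq s f) = 0%N.
Proof. move=> H; elim: s => //= x s ->. by rewrite H. Qed.

Lemma in_enumA (a : A) : List.In a (enum A).
Proof.
have : a \in enum A by rewrite mem_enum.
elim: (enum A) => // x s IH. rewrite inE => /orP [/eqP ->|H]; [by left| right; exact: IH].
Qed.

Definition E1 : gre A :=
  union_seq (enum A) (fun a => if isN (phi a) then cont (GLetter a) else GEmpty A).
Definition E2 : gre A :=
  union_seq (enum A) (fun a => union_seq (enum A) (fun b =>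
    if bad2 a b then cont (GConcat (GLetter a) (GLetter b)) else GEmpty A)).

Lemma E1_lang w : gre_lang E1 w <-> hasz w.
Proof.
rewrite union_lang; split.
- move=> [a [_]]. case E: (isN (phi a)) => //.
  move/cont_lang=> [u [z [v [-> /= ->]]]].
  by rewrite /hasz has_cat /= E orbT.
- move/hasP=> [a Ha Hp]. exists a; split; first exact: in_enumA.
  rewrite Hp; apply/cont_lang.
  case/splitPr: Ha => u v. by exists u, [:: a], v.
Qed.

Lemma pairbad_ex w : pairbad w <-> exists u x y v, w = u ++ [:: x, y & v] /\ bad2 x y.
Proof.
elim: w => [|x w IH]; first by split=> // [[[|? ?] [? [? [? []]]]]].
case: w IH => [|y w] IH.
  by split=> // [[[|? [|? ?]] [? [? [? []]]]]].
rewrite /= -/(pairbad (y :: w)); split.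
- case/orP=> [H|/IH [u [x' [y' [v [E H]]]]]].
  + by exists [::], x, y, w.
  + by exists (x :: u), x', y', v; rewrite E.
- move=> [[|z u] [x' [y' [v [E H]]]]].
  + by case: E => -> -> _; rewrite H.
  + case: E => _ E; apply/orP; right; apply/IH. by exists u, x', y', v.
Qed.

Lemma E2_lang w : gre_lang E2 w <-> pairbad w.
Proof.
rewrite union_lang pairbad_ex; split.
- move=> [a [_ /union_lang [b [_]]]]. case E: (bad2 a b) => //.
  move/cont_lang=> [u [z [v [-> [u1 [v1 [-> [/= -> /= ->]]]]]]]].
  by exists u, a, b, v.
- move=> [u [x [y [v [-> H]]]]]. exists x; split; first exact: in_enumA.
  apply/union_lang; exists y; split; first exact: in_enumA.
  rewrite H; apply/cont_lang; exists u, [:: x; y], v; split=> //.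
  by exists [:: x], [:: y].
Qed.

End S.

Theorem lemma3p1 (m : nat) (I L : Type) (i0 : I) (l0 : L)
  (P : L -> I -> option 'I_m.+1) (A : finType)
  (phi : A -> rees 'I_m.+1 I L) :
  gen_star_height0 (zero_preimage P phi).
Proof.
set e1 := @E1 _ _ _ _ phi. set e2 := @E2 _ _ _ P _ phi.
have h1 : star_height e1 = 0%N by apply: union_sh => a; case: ifP.
have h2 : star_height e2 = 0%N.
  by apply: union_sh => a; apply: union_sh => b; case: ifP.
exists (GUnion e1 e2); split.
- have -> : forall X Y : gre A, star_height (GUnion X Y) = maxn (star_height X) (star_height Y) by [].
  by rewrite h1 h2.
- move=> w.
  have -> : gre_lang (GUnion e1 e2) w <-> gre_lang e1 w \/ gre_lang e2 w by [].
  rewrite E1_lang E2_lang.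
  case: w => [|a w]; first by split=> // [[]].
  by rewrite /zero_preimage ext_char.
Qed.
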